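(* In the setting of the context, for every integer $m\ge2$ the inclusion $\Gamma(G_{m-1},S_{m-1})\hookrightarrow\Gamma(G_m,S_m)$ of Cayley graphs is an isometric embedding.
   Context: $H$ is a finitely presented group with finite generating set $T$, containing a free subgroup $F$ of rank $p$ with free basis $\{d_1,\dots,d_p\}\subset T$ (standing assumption: $\mathrm{Dist}_F^H$ admits an exponentially bounded sequence of palindromic certificates in $F$). $F_x,F_y,F_z$ are free of rank $p$ with bases $R_x=\{x_i\},R_y=\{y_i\},R_z=\{z_i\}$. $G_1=[H\ast_{\langle d_i=x_iy_i^{-1}\rangle}(F_x\times F_y\times F_z)]\times\langle s_1\rangle$; $a_i=x_iz_i$, $b_i=y_iz_i$, $R_{xz}=\{a_i\}$, $R_{yz}=\{b_i\}$; $G_2=\langle G_1,s_2\mid s_2^{-1}a_is_2=b_i,\ 1\le i\le p\rangle$; $G_m=\langle G_{m-1},s_m\mid s_m^{-1}s_1s_m=s_{m-1}\rangle$ for $m\ge3$. Generating sets: $S_1=T\cup R_x\cup R_y\cup R_z\cup R_{xz}\cup R_{yz}\cup\{s_1\}$ and $S_m=S_{m-1}\cup\{s_m\}$ for $m\ge2$. *)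

(* Defs.v *)
(* Groups are given by presentations:
   a group element is a word over an alphabet of generators, modulo the
   congruence generated by free cancellation and the relators. *)
From mathcomp Require Import all_boot.
Set Implicit Arguments. Unset Strict Implicit. Unset Printing Implicit Defensive.

(* letters: (a, false) = a, (a, true) = a^{-1} *)
Definition word (A : Type) := seq (A * bool).

Inductive weq (A : Type) (R : word A -> Prop) : word A -> word A -> Prop :=
| weq_refl u : weq R u u
| weq_sym u v : weq R u v -> weq R v u
| weq_trans u v w : weq R u v -> weq R v w -> weq R u w
| weq_free u v a b : weq R (u ++ (a, b) :: (a, ~~ b) :: v) (u ++ v)
| weq_rel u v r : R r -> weq R (u ++ r ++ v) (u ++ v).

Fixpoint reduced (A : eqType) (w : word A) : bool :=
  match w with
  | x :: ((y :: _) as t) => ~~ ((x.1 == y.1) && (x.2 != y.2)) && reduced t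
  | _ => true
  end.

(* distance in the Cayley graph Gamma(<A|R>, S) between the vertices
   represented by u and v is <= n: some word w over S with |w| <= n
   satisfies u w = v in the group. *)
Definition cay_dist_le (A : Type) (R : word A -> Prop) (S : A -> bool)
    (u v : word A) (n : nat) : Prop :=
  exists w : word A, all (fun l => S l.1) w /\ size w <= n /\ weq R (u ++ w) v.

(* generators: T, x_i, y_i, z_i, a_i = x_i z_i, b_i = y_i z_i, s_k (k >= 1) *)
Inductive gen (T : Type) (p : nat) : Type :=
| GT of T | GX of 'I_p | GY of 'I_p | GZ of 'I_p
| GA of 'I_p | GB of 'I_p | GS of nat.

Definition inS (T : Type) (p m : nat) (g : gen T p) : bool :=
  match g with GS k => (0 < k) && (k <= m) | _ => true end.

Definition commw (A : Type) (g h : A) : word A :=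
  [:: (g, true); (h, true); (g, false); (h, false)].

Definition relG1 (T : eqType) (relsH : seq (word T)) (p : nat) (d : 'I_p -> T)
    (w : word (gen T p)) : Prop :=
  (exists r, r \in relsH /\ w = map (fun l => (GT p l.1, l.2)) r)
  (* F_x x F_y x F_z *)
  \/ (exists i j : 'I_p, w = commw (GX T i) (GY T j) \/ w = commw (GX T i) (GZ T j)
                         \/ w = commw (GY T i) (GZ T j))
  (* amalgamation d_i = x_i y_i^{-1} *)
  \/ (exists i : 'I_p, w = [:: (GT p (d i), false); (GY T i, false); (GX T i, true)])
  \/ (exists i : 'I_p, w = [:: (GA T i, true); (GX T i, false); (GZ T i, false)]
                    \/ w = [:: (GB T i, true); (GY T i, false); (GZ T i, false)])
  (* direct product with <s_1> *)
  \/ (exists g : gen T p, (g \notin [pred h | if h is GS _ then true else false])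
                          /\ w = commw (GS T p 1) g).

Definition relG (T : eqType) (relsH : seq (word T)) (p : nat) (d : 'I_p -> T)
    (m : nat) (w : word (gen T p)) : Prop :=
  relG1 relsH d w
  \/ (2 <= m /\ exists i : 'I_p,
        w = [:: (GS T p 2, true); (GA T i, false); (GS T p 2, false); (GB T i, true)])
  \/ (exists k, 3 <= k <= m /\
        w = [:: (GS T p k, true); (GS T p 1, false); (GS T p k, false); (GS T p k.-1, true)]).

(* Main.v *)
Require Import Defs.
From mathcomp Require Import all_boot zify.
From Stdlib Require Import ClassicalEpsilon Classical.
Set Implicit Arguments. Unset Strict Implicit. Unset Printing Implicit Defensive.

Section Words.
Context (A : Type) (R : word A -> Prop).

Definition winv (w : word A) : word A := rev (map (fun l => (l.1, ~~ l.2)) w).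

Lemma winv_cat x y : winv (x ++ y) = winv y ++ winv x.
Proof. by rewrite /winv map_cat rev_cat. Qed.

Lemma winvK x : winv (winv x) = x.
Proof.
rewrite /winv map_rev revK -map_comp -[RHS]map_id.
by apply: eq_map => -[a b] /=; rewrite negbK.
Qed.

Lemma weq_catl u x y : weq R x y -> weq R (u ++ x) (u ++ y).
Proof.
elim=> {x y} [z|z z' _ IH|z1 z2 z3 _ IH1 _ IH2|u0 v0 a b|u0 v0 r Hr].
- exact: weq_refl.
- exact: weq_sym.
- exact: weq_trans IH2.
- by rewrite !catA; apply: weq_free.
- by rewrite !catA -(catA _ r); apply: weq_rel.
Qed.

Lemma weq_catr v x y : weq R x y -> weq R (x ++ v) (y ++ v).
Proof.
elim=> {x y} [z|z z' _ IH|z1 z2 z3 _ IH1 _ IH2|u0 v0 a b|u0 v0 r Hr].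
- exact: weq_refl.
- exact: weq_sym.
- exact: weq_trans IH2.
- by rewrite -!catA /=; apply: weq_free.
- by rewrite -!catA; apply: weq_rel.
Qed.

Lemma weq_cat x x' y y' : weq R x x' -> weq R y y' -> weq R (x ++ y) (x' ++ y').
Proof.
move=> H1 H2; apply: weq_trans (weq_catr _ H1) _; exact: weq_catl.
Qed.

Lemma weq_invr x : weq R (x ++ winv x) [::].
Proof.
elim: x => [|[a b] x IH] /=; first exact: weq_refl.
rewrite /winv /= rev_cons -cats1 -/(winv x).
apply: weq_trans (_ : weq R ([:: (a, b)] ++ [::] ++ [:: (a, ~~ b)]) [::]); last first.
  exact: (weq_free R [::] [::] a b).
rewrite -cat1s; apply: weq_catl; rewrite catA; exact: weq_catr.
Qed.

Lemma weq_invl x : weq R (winv x ++ x) [::].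
Proof. by have := weq_invr (winv x); rewrite winvK. Qed.

Lemma weq_solve x y : weq R (x ++ winv y) [::] -> weq R x y.
Proof.
move=> H.
apply: weq_trans (_ : weq R ((x ++ winv y) ++ y) y).
  rewrite -catA -{1}(cats0 x); apply: weq_catl; apply: weq_sym; exact: weq_invl.
exact: (weq_catr y H).
Qed.

Lemma weq_solvel x y : weq R (winv y ++ x) [::] -> weq R x y.
Proof.
move=> H.
apply: weq_trans (_ : weq R (y ++ (winv y ++ x)) y); last first.
  by have := weq_catl y H; rewrite cats0.
rewrite catA -{1}(cat0s x); apply: weq_catr; apply: weq_sym; exact: weq_invr.
Qed.

Lemma weq_inv x y : weq R x y -> weq R (winv x) (winv y).
Proof.
move=> H; apply: weq_solve; rewrite winvK.
exact: (weq_trans (weq_catl (winv x) (weq_sym H)) (weq_invl x)).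
Qed.

Lemma weq_conj_nil h x : weq R (winv h ++ x ++ h) [::] -> weq R x [::].
Proof.
move=> H.
have E : h ++ (winv h ++ x ++ h) ++ winv h = (h ++ winv h) ++ x ++ (h ++ winv h).
  by rewrite !catA.
have E1 : weq R ((h ++ winv h) ++ x ++ (h ++ winv h)) x.
  have := weq_cat (weq_invr h) (weq_catl x (weq_invr h)); by rewrite /= cats0.
have E2 : weq R (h ++ (winv h ++ x ++ h) ++ winv h) [::].
  exact: (weq_trans (weq_catl h (weq_catr (winv h) H)) (weq_invr h)).
rewrite E in E2; exact: (weq_trans (weq_sym E1) E2).
Qed.

End Words.

Lemma weq_mono (A : Type) (R R' : word A -> Prop) x y :
  (forall r, R r -> R' r) -> weq R x y -> weq R' x y.
Proof.
move=> HR; elim=> {x y} [z|z z' _ IH|z1 z2 z3 _ IH1 _ IH2|u0 v0 a b|u0 v0 r Hr].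
- exact: weq_refl.
- exact: weq_sym.
- exact: weq_trans IH2.
- exact: weq_free.
- exact/weq_rel/HR.
Qed.


Section Proj.
Context (A I : Type) (psi : A -> option I).

Definition psil (l : A * bool) : word I :=
  if psi l.1 is Some i then [:: (i, l.2)] else [::].
Definition Psi (w : word A) : word I := flatten (map psil w).
Definition rhoX (f : I -> A) (w : word A) : word A :=
  map (fun l => (f l.1, l.2)) (Psi w).

Lemma Psi_cat x y : Psi (x ++ y) = Psi x ++ Psi y.
Proof. by rewrite /Psi map_cat flatten_cat. Qed.

Lemma Psi_cons l x : Psi (l :: x) = psil l ++ Psi x.
Proof. by []. Qed.

Lemma Psi_winv x : Psi (winv x) = winv (Psi x).
Proof.
elim: x => [|[a b] x IH] //.
rewrite /winv /= rev_cons -cats1 -/(winv x) Psi_cat IH.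
rewrite -/(winv (Psi ((a, b) :: x))) Psi_cons winv_cat.
congr (_ ++ _); rewrite /Psi /= cats0 /psil /=; by case: (psi a).
Qed.

Lemma rhoX_cat f x y : rhoX f (x ++ y) = rhoX f x ++ rhoX f y.
Proof. by rewrite /rhoX Psi_cat map_cat. Qed.

Lemma rhoX_winv f x : rhoX f (winv x) = winv (rhoX f x).
Proof. by rewrite /rhoX Psi_winv /winv map_rev -!map_comp. Qed.

Lemma Psi_map f (Hf : forall i, psi (f i) = Some i) y :
  Psi (map (fun l => (f l.1, l.2)) y) = y.
Proof.
elim: y => [|[i b] y IH] //=.
by rewrite Psi_cons IH /psil /= Hf.
Qed.

Lemma rhoXX f g (Hg : forall i, psi (g i) = Some i) w :
  rhoX f (rhoX g w) = rhoX f w.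
Proof. by rewrite /rhoX Psi_map. Qed.

Lemma size_Psi w : size (Psi w) <= size w.
Proof.
elim: w => [|l w IH] //=; rewrite Psi_cons size_cat /psil.
by case: (psi l.1) => [i|] /=; rewrite ?add1n ?add0n // ltnW.
Qed.

Lemma size_rhoX f w : size (rhoX f w) <= size w.
Proof. by rewrite size_map size_Psi. Qed.

Lemma weq_mapF (R0 : word A -> Prop) f y z :
  weq (fun _ : word I => False) y z ->
  weq R0 (map (fun l => (f l.1, l.2)) y) (map (fun l => (f l.1, l.2)) z).
Proof.
elim=> {y z} [z|z z' _ IH|z1 z2 z3 _ IH1 _ IH2|u0 v0 a b|u0 v0 r []].
- exact: weq_refl.
- exact: weq_sym.
- exact: weq_trans IH2.
- rewrite !map_cat /=; exact: weq_free.
Qed.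

Lemma rhoX_weq (R0 : word A -> Prop)
  (HR0f : forall r, R0 r -> weq (fun _ : word I => False) (Psi r) [::]) f x y :
  weq R0 x y -> weq R0 (rhoX f x) (rhoX f y).
Proof.
elim=> {x y} [z|z z' _ IH|z1 z2 z3 _ IH1 _ IH2|u0 v0 a b|u0 v0 r Hr].
- exact: weq_refl.
- exact: weq_sym.
- exact: weq_trans IH2.
- rewrite !rhoX_cat; apply: weq_catl.
  rewrite /rhoX !Psi_cons /psil /=.
  case: (psi a) => [i|] /=; last exact: weq_refl.
  exact: (weq_free R0 [::]).
- rewrite !rhoX_cat; apply: weq_catl.
  have := weq_catr (rhoX f v0) (weq_mapF R0 f (HR0f _ Hr)); by [].
Qed.

End Proj.


Section HNN.
Context (A I : Type) (isT : A -> bool) (t : A) (R0 : word A -> Prop)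
  (c d : I -> A) (psi : A -> option I).
Hypothesis HisT : forall a, isT a -> a = t.
Hypothesis Htt : isT t.
Hypothesis Hc : forall i, psi (c i) = Some i.
Hypothesis Hd : forall i, psi (d i) = Some i.
Hypothesis Hct : forall i, ~~ isT (c i).
Hypothesis Hdt : forall i, ~~ isT (d i).
Hypothesis HR0t : forall r, R0 r -> all (fun l => ~~ isT l.1) r.
Hypothesis HR0f : forall r, R0 r -> weq (fun _ : word I => False) (Psi psi r) [::].

Definition reln i : word A := [:: (t, true); (c i, false); (t, false); (d i, true)].
Definition RG (w : word A) : Prop := R0 w \/ exists i, w = reln i.

Local Notation weqB := (weq R0).
Local Notation rho := (rhoX psi).

Definition P (b : bool) := if b then rho c else rho d.
Definition Q (b : bool) := if b then rho d else rho c.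

Lemma P_nil b : P b [::] = [::]. Proof. by case: b. Qed.
Lemma Q_nil b : Q b [::] = [::]. Proof. by case: b. Qed.
Lemma PN b : P (~~ b) = Q b. Proof. by case: b. Qed.
Lemma QN b : Q (~~ b) = P b. Proof. by case: b. Qed.
Lemma P_cat b x y : P b (x ++ y) = P b x ++ P b y.
Proof. by case: b; rewrite /= rhoX_cat. Qed.
Lemma Q_cat b x y : Q b (x ++ y) = Q b x ++ Q b y.
Proof. by case: b; rewrite /= rhoX_cat. Qed.
Lemma P_winv b x : P b (winv x) = winv (P b x).
Proof. by case: b; rewrite /= rhoX_winv. Qed.
Lemma Q_winv b x : Q b (winv x) = winv (Q b x).
Proof. by case: b; rewrite /= rhoX_winv. Qed.
Lemma PP b b' x : P b (P b' x) = P b x.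
Proof. by case: b; case: b'; rewrite /= rhoXX. Qed.
Lemma PQ b b' x : P b (Q b' x) = P b x.
Proof. by case: b; case: b'; rewrite /= rhoXX. Qed.
Lemma QP b b' x : Q b (P b' x) = Q b x.
Proof. by case: b; case: b'; rewrite /= rhoXX. Qed.
Lemma QQ b b' x : Q b (Q b' x) = Q b x.
Proof. by case: b; case: b'; rewrite /= rhoXX. Qed.
Lemma P_weq b x y : weqB x y -> weqB (P b x) (P b y).
Proof. by case: b => /=; apply: rhoX_weq. Qed.
Lemma Q_weq b x y : weqB x y -> weqB (Q b x) (Q b y).
Proof. by case: b => /=; apply: rhoX_weq. Qed.

Definition isone (k : word A) : bool :=
  if excluded_middle_informative (weqB k [::]) then true else false.

Lemma isoneP k : isone k <-> weqB k [::].
Proof. by rewrite /isone; case: excluded_middle_informative. Qed.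

Lemma isone_weq k k' : weqB k k' -> isone k = isone k'.
Proof.
move=> H; apply/idP/idP => /isoneP H1; apply/isoneP.
  exact: weq_trans (weq_sym H) H1.
exact: weq_trans H H1.
Qed.

Definition X := (word A * seq (bool * word A))%type.

Definition canc (b : bool) (k : word A) (r : seq (bool * word A)) : bool :=
  if r is (b', _) :: _ then (b' == ~~ b) && isone k else false.

Definition act_t (b : bool) (x : X) : X :=
  let: (g, r) := x in
  let k := winv (P b g) ++ g in
  if canc b k r then (Q b g ++ (head (b, [::]) r).2, behead r)
  else (Q b g, (b, k) :: r).

Arguments act_t : simpl never.

Definition act_l (l : A * bool) (x : X) : X :=
  if isT l.1 then act_t l.2 x else (l :: x.1, x.2).

Definition act (w : word A) (x : X) : X := foldr act_l x w.

Fixpoint req (r r' : seq (bool * word A)) : Prop :=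
  match r, r' with
  | [::], [::] => True
  | (b, k) :: s, (b', k') :: s' => b = b' /\ weqB k k' /\ req s s'
  | _, _ => False
  end.

Definition xeq (x y : X) := weqB x.1 y.1 /\ req x.2 y.2.

Fixpoint rok (r : seq (bool * word A)) : Prop :=
  match r with
  | [::] => True
  | (b, k) :: s =>
      weqB (P b k) [::] /\
      (if s is (b', _) :: _ then weqB k [::] -> b' = b else True) /\ rok s
  end.

Lemma req_refl r : req r r.
Proof. elim: r => [|[b k] r IH] //=; split=> //; split=> //; apply: weq_refl. Qed.

Lemma req_sym r r' : req r r' -> req r' r.
Proof.
elim: r r' => [|[b k] r IH] [|[b' k'] r'] //= [-> [H1 H2]]; split=> //.
by split; [apply: weq_sym | apply: IH].
Qed.

Lemma req_trans r1 r2 r3 : req r1 r2 -> req r2 r3 -> req r1 r3.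
Proof.
elim: r1 r2 r3 => [|[b k] r IH] [|[b' k'] r'] [|[b'' k''] r''] //=.
move=> [-> [H1 H2]] [-> [H3 H4]]; split=> //; split.
  exact: weq_trans H3.
exact: IH H4.
Qed.

Lemma xeq_refl x : xeq x x.
Proof. split; [exact: weq_refl | exact: req_refl]. Qed.
Lemma xeq_sym x y : xeq x y -> xeq y x.
Proof. by case=> H1 H2; split; [apply: weq_sym | apply: req_sym]. Qed.
Lemma xeq_trans x y z : xeq x y -> xeq y z -> xeq x z.
Proof.
case=> H1 H2 [H3 H4]; split; [exact: weq_trans H3 | exact: req_trans H4].
Qed.

Lemma act_t_resp b x y : xeq x y -> xeq (act_t b x) (act_t b y).
Proof.
case: x => g r; case: y => g' r' [/= Hg Hr].
have Hk : weqB (winv (P b g) ++ g) (winv (P b g') ++ g').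
  by apply: weq_cat => //; apply: weq_inv; apply: P_weq.
have HQ := Q_weq b Hg.
rewrite /act_t.
case: r r' Hr => [|[b1 k1] s] [|[b1' k1'] s'] //=.
move=> [<- [Hk1 Hs]]; rewrite (isone_weq Hk).
case: ifP => _ /=.
  by split=> //; apply: weq_cat.
by split=> //; split=> //; split=> //; split.
Qed.

Lemma Pk_nil b g : weqB (P b (winv (P b g) ++ g)) [::].
Proof. rewrite P_cat P_winv PP; exact: weq_invl. Qed.

Lemma act_t_ok b g r : rok r -> rok (act_t b (g, r)).2.
Proof.
rewrite /act_t; case E: canc => /=.
  by case: r E => [|[b1 k1] s] //= _ [_ [_ H]].
move=> Hr; split; first exact: Pk_nil.
split=> //.
case: r E Hr => [|[b1 k1] s] //= E _ /isoneP Hk.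
by move: E; rewrite Hk andbT; clear Hk; by destruct b1, b.
Qed.

Lemma t_inv b g r : rok r -> xeq (act_t (~~ b) (act_t b (g, r))) (g, r).
Proof.
move=> Hr.
rewrite {2}/act_t; case E: canc.
- case: r Hr E => [|[b1 k1] s] //= [Hk1 [Hs Hrs]] /andP [/eqP Eb1 /isoneP Hk].
  subst b1.
  rewrite /act_t PN QN Q_cat QQ.
  have Hk2 : weqB (winv (Q b g ++ Q b k1) ++ Q b g ++ k1) k1.
    rewrite winv_cat -catA.
    apply: weq_trans (_ : weqB (winv (Q b k1) ++ k1) k1).
      apply: weq_catl; rewrite catA -{2}(cat0s k1); apply: weq_catr.
      exact: weq_invl.
    rewrite -PN; apply: weq_trans (_ : weqB (winv [::] ++ k1) k1); last first.
      exact: weq_refl.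
    by apply: weq_catr; apply: weq_inv.
  have Hg : weqB g (P b g) by apply: weq_solvel.
  have HPk1 : weqB (P b k1) [::].
    by rewrite -(PQ b b) -PN -(P_nil b); apply: (P_weq _ Hk1).
  have Hc2 : canc (~~ b) (winv (Q b g ++ Q b k1) ++ Q b g ++ k1) s = false.
    case: s Hs Hrs => [|[b2 k2] s'] //= Hs _.
    apply/negP => /andP [/eqP Eb2 /isoneP Hk3].
    have : weqB k1 [::] := weq_trans (weq_sym Hk2) Hk3.
    move/Hs => E'; move: Eb2; rewrite E' negbK; by destruct b.
  rewrite Hc2; split => /=.
    rewrite P_cat PQ; apply: weq_trans (weq_catl _ HPk1) _; rewrite cats0.
    exact: weq_sym.
  by split=> //; split; [exact: Hk2 | exact: req_refl].
- rewrite /act_t PN QN QQ.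
  have -> : canc (~~ b) (winv (Q b g) ++ Q b g) ((b, winv (P b g) ++ g) :: r).
    rewrite /= negbK eqxx /=; apply/isoneP; exact: weq_invl.
  rewrite /= PQ; split; last exact: req_refl.
  by have := weq_catr g (weq_invr R0 (P b g)); rewrite -catA.
Qed.

Lemma act_t_pre b y g r : weqB (P b y) y ->
  xeq (act_t b (y ++ g, r)) (Q b y ++ (act_t b (g, r)).1, (act_t b (g, r)).2).
Proof.
move=> Hy.
have Hk : weqB (winv (P b (y ++ g)) ++ y ++ g) (winv (P b g) ++ g).
  rewrite P_cat winv_cat -catA; apply: weq_catl.
  have H : weqB (winv (P b y) ++ y) [::].
    apply: weq_trans (_ : weqB (winv y ++ y) [::]); last exact: weq_invl.
    by apply: weq_catr; apply: weq_inv.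
  rewrite catA; exact: (weq_catr g H).
rewrite /act_t Q_cat.
have -> : canc b (winv (P b (y ++ g)) ++ y ++ g) r = canc b (winv (P b g) ++ g) r.
  by case: r => [|[b1 k1] s] //=; rewrite (isone_weq Hk).
case: canc => /=.
  by rewrite catA; apply: xeq_refl.
by split; [apply: weq_refl | split; [| split; [| apply: req_refl]]].
Qed.

Lemma act_cat u v x : act (u ++ v) x = act u (act v x).
Proof. by rewrite /act foldr_cat. Qed.

Lemma act_l_resp l x y : xeq x y -> xeq (act_l l x) (act_l l y).
Proof.
rewrite /act_l; case: ifP => _; first exact: act_t_resp.
by case=> H1 H2; split => //=; apply: (weq_catl [:: l]).
Qed.

Lemma act_resp w x y : xeq x y -> xeq (act w x) (act w y).
Proof. by elim: w => [|l w IH] //= /IH; apply: act_l_resp. Qed.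

Lemma act_l_ok l x : rok x.2 -> rok (act_l l x).2.
Proof.
rewrite /act_l; case: ifP => _ //; case: x => g r; exact: act_t_ok.
Qed.

Lemma act_ok w x : rok x.2 -> rok (act w x).2.
Proof. by elim: w => [|l w IH] //= /IH; apply: act_l_ok. Qed.

Lemma act_free a b x : rok x.2 -> xeq (act_l (a, b) (act_l (a, ~~ b) x)) x.
Proof.
case: x => g r Hr; rewrite /act_l /=; case: (isT a).
  by have := @t_inv (~~ b) g r Hr; rewrite negbK.
split; [exact: (weq_free R0 [::] g a b) | exact: req_refl].
Qed.

Lemma act_tfree w g r : all (fun l => ~~ isT l.1) w -> act w (g, r) = (w ++ g, r).
Proof.
elim: w => [|l w IH] //= /andP [Hl /IH ->].
by rewrite /act_l (negbTE Hl).
Qed.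

Lemma act_reln i x : rok x.2 -> xeq (act (reln i) x) x.
Proof.
case: x => g r Hr.
rewrite /reln /= /act_l /= Htt (negbTE (Hct i)) (negbTE (Hdt i)) /=.
have H1 := @act_t_pre false [:: (d i, true)] g r.
have E1 : P false [:: (d i, true)] = [:: (d i, true)].
  by rewrite /= /rhoX /Psi /= /psil /= Hd.
have E2 : Q false [:: (d i, true)] = [:: (c i, true)].
  by rewrite /= /rhoX /Psi /= /psil /= Hd.
rewrite E1 E2 in H1; have {}H1 := H1 (weq_refl _ _).
set x1 := act_t false (g, r) in H1.
apply: xeq_trans (_ : xeq (act_t true x1) _); last first.
  by rewrite /x1; have := @t_inv false g r Hr.
apply: act_t_resp.
apply: xeq_trans (_ : xeq ((c i, false) :: (c i, true) :: x1.1, x1.2) _).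
  case: H1 => H1a H1b; split => //=; exact: (weq_catl [:: (c i, false)]).
split; [exact: (weq_free R0 [::] _ (c i) false) | exact: req_refl].
Qed.

Lemma act_weq u v : weq RG u v -> forall x, rok x.2 -> xeq (act u x) (act v x).
Proof.
elim=> {u v} [z|z z' _ IH|z1 z2 z3 _ IH1 _ IH2|u0 v0 a b|u0 v0 r Hr] x Hx.
- exact: xeq_refl.
- exact/xeq_sym/IH.
- exact: xeq_trans (IH1 _ Hx) (IH2 _ Hx).
- rewrite !act_cat /=; apply: act_resp; apply: act_free; exact: act_ok.
- rewrite !act_cat; apply: act_resp.
  have Hv := act_ok v0 Hx.
  case: Hr => [Hr | [i ->]]; last exact: act_reln.
  case E: (act v0 x) Hv => [g rr] /= Hv.
  rewrite act_tfree; last exact: HR0t.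
  split; [exact: (weq_rel [::] g Hr) | exact: req_refl].
Qed.

Definition nt (l : A * bool) := ~~ isT l.1.

Definition has_pinch (w : word A) : Prop :=
  exists w1 e y w2, w = w1 ++ (t, e) :: y ++ (t, ~~ e) :: w2 /\ all nt y /\
                    weqB y (P e y).

Lemma britton_aux w g : ~ has_pinch w -> has (fun l => isT l.1) w ->
  exists y e w' z k r, w = y ++ (t, e) :: w' /\ all nt y /\
    act w (g, [::]) = (y ++ Q e z, (e, k) :: r).
Proof.
elim: w => [|[a b] w0 IH] //= Hnp.
have Hnp0 : ~ has_pinch w0.
  move=> [w1 [e [y [w2 [E Hrest]]]]]; apply: Hnp.
  by exists ((a, b) :: w1), e, y, w2; rewrite E.
case Ha: (isT a) => /= Hh.
- have Eat := HisT Ha; subst a.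
  rewrite /act_l /= Htt.
  case Hh0: (has (fun l => isT l.1) w0).
  + have [y [e [w' [z [k [r [Ew [Hy Eact]]]]]]]] := IH Hnp0 Hh0.
    rewrite Eact /act_t.
    case E: canc.
      move: E => /= /andP [/eqP Ee /isoneP Hk]; exfalso; apply: Hnp.
      have Eb : b = ~~ e by rewrite Ee negbK.
      subst b.
      exists [::], (~~ e), y, w'; rewrite negbK Ew; split=> //; split=> //.
      rewrite PN; apply: weq_solvel.
      apply: (weq_conj_nil (h := Q e z)).
      move: Hk; rewrite PN Q_cat QQ winv_cat -!catA; exact.
    by exists [::], b, w0, (y ++ Q e z), (winv (P b (y ++ Q e z)) ++ y ++ Q e z), ((e, k) :: r).
  + have Hall : all nt w0 by rewrite /nt all_predC Hh0.
    rewrite act_tfree // /act_t /=.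
    by exists [::], b, w0, (w0 ++ g), (winv (P b (w0 ++ g)) ++ w0 ++ g), [::].
- have [y [e [w' [z [k [r [Ew [Hy Eact]]]]]]]] := IH Hnp0 Hh.
  exists ((a, b) :: y), e, w', z, k, r; rewrite Ew /=; split=> //; split.
    by rewrite /nt Ha.
  by rewrite -Ew Eact /act_l /= Ha.
Qed.

Lemma emb u v : all nt u -> all nt v -> weq RG u v -> weqB u v.
Proof.
move=> Hu Hv H.
have := act_weq H (x:=([::], [::])) Logic.I.
by rewrite !act_tfree // !cats0 => -[].
Qed.

Lemma pinch_exists u w v : all nt u -> all nt v -> has (fun l => isT l.1) w ->
  weq RG (u ++ w) v -> has_pinch w.
Proof.
move=> Hu Hv Hh H.
case: (classic (has_pinch w)) => // Hn; exfalso.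
have [y [e [w' [z [k [r [Ew [Hy Eact]]]]]]]] := britton_aux [::] Hn Hh.
have := act_weq H (x:=([::], [::])) Logic.I.
by rewrite act_cat Eact !act_tfree // => -[].
Qed.

Lemma Hrel i : weq RG (reln i) [::].
Proof.
have := @weq_rel _ RG [::] [::] (reln i) (or_intror (ex_intro _ i erefl)).
by [].
Qed.

Lemma conj1 e i b :
  weq RG [:: (t, e); ((if e then c else d) i, b); (t, ~~ e)]
         [:: ((if e then d else c) i, b)].
Proof.
have H1 : weq RG [:: (t, true); (c i, false); (t, false)] [:: (d i, false)].
  apply: weq_solve; exact: Hrel.
have H2 : weq RG [:: (t, false); (d i, false); (t, true)] [:: (c i, false)].
  apply: weq_trans (weq_sym (weq_catl [:: (t, false)] (weq_catr [:: (t, true)] H1))) _.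
  apply: weq_trans (weq_free RG [::] [:: (c i, false); (t, false); (t, true)] t false) _.
  exact: (weq_free RG [:: (c i, false)] [::] t false).
case: e; case: b => //=.
- exact: (weq_inv H1).
- exact: (weq_inv H2).
Qed.

Lemma conj_gen e z :
  weq RG ((t, e) :: map (fun l => ((if e then c else d) l.1, l.2)) z ++ [:: (t, ~~ e)])
         (map (fun l => ((if e then d else c) l.1, l.2)) z).
Proof.
elim: z => [|[i b] z IH] /=.
  exact: (weq_free RG [::] [::] t e).
set f := (fun l : I * bool => _).
have := weq_free RG [:: (t, e); ((if e then c else d) i, b)] (map f z ++ [:: (t, ~~ e)]) t (~~ e).
rewrite negbK => H.
apply: weq_trans (weq_sym H) _.
exact: (weq_cat (conj1 e i b) IH).
Qed.

Lemma P_map e y : P e y = map (fun l => ((if e then c else d) l.1, l.2)) (Psi psi y).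
Proof. by case: e. Qed.
Lemma Q_map e y : Q e y = map (fun l => ((if e then d else c) l.1, l.2)) (Psi psi y).
Proof. by case: e. Qed.

Lemma conj_rel e y : weqB y (P e y) ->
  weq RG ((t, e) :: y ++ [:: (t, ~~ e)]) (Q e y).
Proof.
move=> H.
apply: weq_trans (_ : weq RG ((t, e) :: P e y ++ [:: (t, ~~ e)]) _).
  apply: (weq_catl [:: (t, e)]); apply: weq_catr.
  by apply: weq_mono H => r Hr; left.
rewrite P_map Q_map; exact: conj_gen.
Qed.

Lemma all_rhoX (S : pred A) f (Hf : forall i, S (f i)) y :
  all (fun l => S l.1) (rhoX psi f y).
Proof. by rewrite /rhoX; elim: (Psi psi y) => //= l s ->; rewrite Hf. Qed.

Theorem hnn_main (S : pred A) (HSc : forall i, S (c i)) (HSd : forall i, S (d i)) n :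
  forall w u v, size w <= n -> all nt u -> all nt v -> all (fun l => S l.1) w ->
  weq RG (u ++ w) v ->
  exists w', all (fun l => S l.1 && ~~ isT l.1) w' /\ size w' <= size w /\
             weqB (u ++ w') v.
Proof.
have base : forall w u v, all nt u -> all nt v -> all (fun l => S l.1) w ->
    ~~ has (fun l => isT l.1) w -> weq RG (u ++ w) v ->
    exists w', all (fun l => S l.1 && ~~ isT l.1) w' /\ size w' <= size w /\
             weqB (u ++ w') v.
  move=> w u v Hu Hv HS Hh H; exists w; split; last split=> //.
    by rewrite all_predI HS /= all_predC.
  by apply: emb => //; rewrite all_cat Hu /nt all_predC Hh.
elim: n => [|n IH] w u v Hs Hu Hv HS H.
  by apply: base => //; case: w Hs {H HS}.
case Hh: (has (fun l => isT l.1) w); last by apply: base => //; rewrite Hh.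
have [w1 [e [y [w2 [Ew [Hy Hyp]]]]]] := pinch_exists Hu Hv Hh H.
have Hsz : size (Q e y) <= size y by destruct e; apply: size_rhoX.
have Hs2 : size (w1 ++ Q e y ++ w2) < size w.
  rewrite Ew !size_cat /= size_cat /=.
  rewrite ltn_add2l; apply: (leq_ltn_trans (leq_add Hsz (leqnn _))).
  by rewrite addnS ltnS leqnSn.
have HS2 : all (fun l => S l.1) (w1 ++ Q e y ++ w2).
  move: HS; rewrite Ew !all_cat /= all_cat /= => /and3P [-> _ /and3P [_ _ ->]].
  by rewrite andbT /=; destruct e; apply: all_rhoX.
have H2 : weq RG (u ++ w1 ++ Q e y ++ w2) v.
  apply: weq_trans H; rewrite Ew.
  have E : u ++ w1 ++ (t, e) :: y ++ (t, ~~ e) :: w2 =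
           (u ++ w1) ++ ((t, e) :: y ++ [:: (t, ~~ e)]) ++ w2.
    by rewrite -!catA /= -catA.
  rewrite E catA; apply: weq_sym; apply: weq_catl; apply: weq_catr.
  exact: conj_rel.
have [w' [Hw'1 [Hw'2 Hw'3]]] := IH _ u v (leq_trans Hs2 Hs) Hu Hv HS2 H2.
exists w'; split=> //; split=> //.
exact: leq_trans Hw'2 (ltnW Hs2).
Qed.

End HNN.


Section Concrete.
Context (T : finType) (relsH : seq (word T)) (p : nat) (dd : 'I_p -> T).

Local Notation G := (gen T p).

Definition isTm (m : nat) (g : G) : bool := if g is GS k then k == m else false.
Definition psiZ (g : G) : option 'I_p :=
  match g with GZ i | GA i | GB i => Some i | _ => None end.
Definition psiS (g : G) : option unit := if g is GS _ then Some tt else None.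

Lemma ft2 (J : Type) (i : J) b : weq (fun _ : word J => False) [:: (i, b); (i, ~~ b)] [::].
Proof. exact: (weq_free _ [::] [::] i b). Qed.

Lemma Psi_GT (J : Type) (psi : G -> option J) (Hp : forall x, psi (GT p x) = None) r :
  Psi psi (map (fun l => (GT p l.1, l.2)) r) = [::].
Proof. by elim: r => [|l r IH] //=; rewrite Psi_cons IH /psil /= Hp. Qed.

Lemma HR0f_Z k r : relG relsH dd k r -> weq (fun _ => False) (Psi psiZ r) [::].
Proof.
case=> [ [ [r' [_ ->]] | [ [i [j [->|[->|->]]]] | [ [i ->] | [ [i [->|->]] | [g [Hg ->]] ] ] ] ]
      | [ [_ [i ->]] | [k' [_ ->]] ] ];
  rewrite /Psi /psil /= ?cats0; try exact: weq_refl; try exact: ft2.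
- by rewrite -/(Psi psiZ _) Psi_GT //; apply: weq_refl.
- by case: g Hg => //= *; (exact: weq_refl || exact: ft2).
Qed.

Lemma HR0f_S k r : relG relsH dd k r -> weq (fun _ => False) (Psi psiS r) [::].
Proof.
case=> [ [ [r' [_ ->]] | [ [i [j [->|[->|->]]]] | [ [i ->] | [ [i [->|->]] | [g [Hg ->]] ] ] ] ]
      | [ [_ [i ->]] | [k' [_ ->]] ] ];
  rewrite /Psi /psil /= ?cats0; try exact: weq_refl; try exact: ft2.
- by rewrite -/(Psi psiS _) Psi_GT //; apply: weq_refl.
- by case: g Hg => //= *; exact: ft2.
- apply: weq_trans (weq_free _ [::] [:: (tt, false); (tt, true)] tt true) _.
  exact: ft2.
Qed.
End Concrete.


Section Concrete2.
Context (T : finType) (relsH : seq (word T)) (p : nat) (dd : 'I_p -> T).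
Local Notation G := (gen T p).

Lemma all_GT (m : nat) r :
  all (fun l : G * bool => ~~ isTm m l.1) (map (fun l => (GT p l.1, l.2)) r).
Proof. by elim: r. Qed.

Lemma HR0t_m m r : 2 <= m -> relG relsH dd m.-1 r -> all (fun l => ~~ isTm m l.1) r.
Proof.
move=> hm.
case=> [ [ [r' [_ ->]] | [ [i [j [->|[->|->]]]] | [ [i ->] | [ [i [->|->]] | [g [Hg ->]] ] ] ] ]
      | [ [H2 [i ->]] | [k' [Hk ->]] ] ] //=.
- exact: all_GT.
- case: g Hg => //= *; rewrite andbT; apply/negP => /eqP; lia.
- rewrite !andbT; apply/negP => /eqP; lia.
- move: Hk => /andP [Hk1 Hk2].
  rewrite !andbT; apply/and3P; split; apply/negP => /eqP; lia.
Qed.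

Lemma isTm_GS m (a : G) : isTm m a -> a = GS T p m.
Proof. by case: a => //= k /eqP ->. Qed.

Lemma inS_nt m (g : G) : 2 <= m -> inS m.-1 g -> ~~ isTm m g.
Proof. case: g => //= k hm /andP [H1 H2]; apply/negP => /eqP; lia. Qed.

Lemma inS_back m (g : G) : 2 <= m -> inS m g && ~~ isTm m g -> inS m.-1 g.
Proof.
case: g => //= k hm /andP [/andP [H1 H2] /eqP H3]; apply/andP; split=> //; lia.
Qed.

Lemma inS_fwd m (g : G) : inS m.-1 g -> inS m g.
Proof. case: g => //= k /andP [H1 H2]; apply/andP; split=> //; lia. Qed.

Lemma relG_mono m r : relG relsH dd m.-1 r -> relG relsH dd m r.
Proof.
case=> [H | [[H1 H2] | [k [Hk H]]]]; [left | right; left | right; right] => //.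
  split=> //; lia.
by exists k; split=> //; move: Hk => /andP [? ?]; apply/andP; split => //; lia.
Qed.

Lemma relG_split2 r : relG relsH dd 2 r ->
  RG (GS T p 2) (relG relsH dd 1) (@GA T p) (@GB T p) r.
Proof.
case=> [H | [[_ [i ->]] | [k [Hk _]]]].
- by left; left.
- by right; exists i.
- move: Hk => /andP [? ?]; lia.
Qed.

Lemma relG_split3 m r : 3 <= m -> relG relsH dd m r ->
  RG (GS T p m) (relG relsH dd m.-1) (fun _ : unit => GS T p 1)
     (fun _ : unit => GS T p m.-1) r.
Proof.
move=> hm.
case=> [H | [[_ [i ->]] | [k [Hk ->]]]].
- by left; left.
- by left; right; left; split=> //; [lia | exists i].
- case: (k =P m) => [-> | Hkm].
    by right; exists tt.
  left; right; right; exists k; split=> //.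
  move: Hk => /andP [? ?]; apply/andP; split=> //; lia.
Qed.

End Concrete2.

Theorem lemma3p3 (T : finType) (relsH : seq (word T)) (p : nat) (d : 'I_p -> T)
  (d_inj : injective d)
  (F_free : forall w : word 'I_p, reduced w -> w != [::] ->
     ~ weq (fun r => r \in relsH) (map (fun l => (d l.1, l.2)) w) [::])
  (m : nat) (hm : 2 <= m) :
  forall u v : word (gen T p),
    all (fun l => inS (m.-1) l.1) u -> all (fun l => inS (m.-1) l.1) v ->
    forall n : nat,
      cay_dist_le (relG relsH d m.-1) (inS m.-1) u v n <->
      cay_dist_le (relG relsH d m) (inS m) u v n.
Proof.
move=> u v Hu Hv n; split.
  case=> w [Hw [Hs H]]; exists w; split.
    by apply: sub_all Hw => l /inS_fwd.
  by split=> //; apply: weq_mono H => r; apply: relG_mono.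
case=> w [Hw [Hs H]].
have Hu' : all (nt (isTm m)) u.
  by apply: sub_all Hu => l /(inS_nt hm).
have Hv' : all (nt (isTm m)) v.
  by apply: sub_all Hv => l /(inS_nt hm).
have fin : forall w', all (fun l => inS m l.1 && ~~ isTm m l.1) w' ->
    size w' <= size w -> weq (relG relsH d m.-1) (u ++ w') v ->
    cay_dist_le (relG relsH d m.-1) (inS m.-1) u v n.
  move=> w' Hw' Hs' H'; exists w'; split.
    by apply: sub_all Hw' => l /(inS_back hm).
  by split=> //; exact: leq_trans Hs' Hs.
have [Em | Hm3] : m = 2 \/ 3 <= m by lia.
- subst m.
  have H2 : weq (RG (GS T p 2) (relG relsH d 1) (@GA T p) (@GB T p)) (u ++ w) v.
    by apply: weq_mono H => r; apply: relG_split2.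
  have [w' [Hw' [Hs' H']]] := hnn_main (psi := @psiZ T p) (c := @GA T p) (d := @GB T p) (@isTm_GS T p 2) (eqxx 2)
    (fun i => erefl) (fun i => erefl) (fun i => erefl) (fun i => erefl)
    (fun r => @HR0t_m T relsH p d 2 r (leqnn 2))
    (fun r => @HR0f_Z T relsH p d 1 r)
    (S := inS 2) (fun i => erefl) (fun i => erefl) (leqnn (size w)) Hu' Hv' Hw H2.
  exact: fin Hw' Hs' H'.
- have H2 : weq (RG (GS T p m) (relG relsH d m.-1) (fun _ : unit => GS T p 1)
     (fun _ : unit => GS T p m.-1)) (u ++ w) v.
    by apply: weq_mono H => r; apply: relG_split3.
  have Hct : forall i : unit, ~~ isTm m (GS T p 1) by move=> _ /=; apply/negP => /eqP; lia.
  have Hdt : forall i : unit, ~~ isTm m (GS T p m.-1) by move=> _ /=; apply/negP => /eqP; lia.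
  have HSc : forall i : unit, inS m (GS T p 1) by move=> _ /=; lia.
  have HSd : forall i : unit, inS m (GS T p m.-1) by move=> _ /=; lia.
  have [w' [Hw' [Hs' H']]] := hnn_main (psi := @psiS T p) (c := fun _ : unit => GS T p 1) (d := fun _ : unit => GS T p m.-1) (@isTm_GS T p m) (eqxx m)
    (fun i => match i with tt => erefl end) (fun i => match i with tt => erefl end) Hct Hdt
    (fun r => @HR0t_m T relsH p d m r hm)
    (fun r => @HR0f_S T relsH p d m.-1 r)
    HSc HSd (leqnn (size w)) Hu' Hv' Hw H2.
  exact: fin Hw' Hs' H'.
Qed.
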